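(* Let $P\in\mathbb{Q}_{\ge0}^{N\times N}$ be the transition matrix of a reversible and ergodic Markov chain on $V$ with stationary distribution $\pi$ and mixing rate $t^*$. For the rotor-router model on a multidigraph for $P$, with any initial configuration, $$\left|\chi^{(T)}_w-\mu^{(T)}_w\right|\le\frac{3\pi_w}{\pi_{\min}}\,t^*\,\Delta\,\bar\Delta$$ for all $w\in V$ and $T\ge0$.
   Context: Let $V=\{1,\dots,N\}$ and let $P\in\mathbb{Q}_{\ge 0}^{N\times N}$ be an ergodic (irreducible, aperiodic) stochastic matrix with stationary distribution $\pi$; $\pi_{\min}=\min_v\pi_v$; reversible means $\pi_uP_{u,v}=\pi_vP_{v,u}$ for all $u,v$. For $v\in V$ let $\mathcal N(v)=\{u: P_{v,u}>0\}$, $\delta(v)=|\mathcal N(v)|$, $\Delta=\max_v\delta(v)$. Total variation distance $d_{TV}(\xi,\zeta)=\frac12\|\xi-\zeta\|_1$; mixing time $\tau(\varepsilon)=\max_{v}\min\{t\ge0: d_{TV}(P^t_{v,\cdot},\pi)\le\varepsilon\}$; mixing rate $t^*=\tau(1/4)$. For each $v$ let $\bar\delta(v)$ be a positive integer with $\bar\delta(v)P_{v,u}\in\mathbb{Z}$ for all $u$, and $\bar\Delta=\max_v\bar\delta(v)$. The rotor router: $\sigma_v(0),\dots,\sigma_v(\bar\delta(v)-1)\in\mathcal N(v)$ is any sequence in which each $u\in\mathcal N(v)$ occurs exactly $\bar\delta(v)P_{v,u}$ times, extended by $\sigma_v(i)=\sigma_v(i\bmod\bar\delta(v))$. Write $I_{v,u}[z,z')=|\{j\in\{z,\dots,z'-1\}:\sigma_v(j)=u\}|$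 (zero if $z'\le z$). Given $\chi^{(0)}\in\mathbb{Z}_{\ge0}^N$, set $Z^{(t)}_{v,u}=I_{v,u}\big[\sum_{s=0}^{t-1}\chi^{(s)}_v,\sum_{s=0}^{t}\chi^{(s)}_v\big)$, $\chi^{(t+1)}_u=\sum_vZ^{(t)}_{v,u}$, $\mu^{(0)}=\chi^{(0)}$, $\mu^{(t)}=\mu^{(0)}P^t$. *)

(* Defs.v *)
From HB Require Import structures.
From mathcomp Require Import all_boot all_order all_algebra.
Set Implicit Arguments. Unset Strict Implicit. Unset Printing Implicit Defensive.
Import Order.TTheory GRing.Theory Num.Theory.
Local Open Scope ring_scope.

Definition stochastic (N : nat) (P : 'M[rat]_N) : Prop :=
  (forall u v, 0 <= P u v) /\ (forall u, \sum_(v < N) P u v = 1).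

Definition irreducible (N : nat) (P : 'M[rat]_N) : Prop :=
  forall u v, exists t : nat, 0 < (P ^+ t) u v.

Definition aperiodic (N : nat) (P : 'M[rat]_N) : Prop :=
  forall v (d : nat),
    (forall t : nat, (0 < t)%N -> 0 < (P ^+ t) v v -> (d %| t)%N) -> d = 1%N.

Definition ergodic (N : nat) (P : 'M[rat]_N) : Prop :=
  irreducible P /\ aperiodic P.

Definition stationary (N : nat) (P : 'M[rat]_N) (pi : 'rV[rat]_N) : Prop :=
  (forall v, 0 <= pi 0 v) /\ \sum_(v < N) pi 0 v = 1 /\ pi *m P = pi.

Definition reversible (N : nat) (P : 'M[rat]_N) (pi : 'rV[rat]_N) : Prop :=
  forall u v, pi 0 u * P u v = pi 0 v * P v u.

(* pi_min = min_v pi_v  (idx 1 is harmless since pi is a distribution) *)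
Definition pi_min (N : nat) (pi : 'rV[rat]_N) : rat :=
  \big[Num.min/1]_(v < N) pi 0 v.

Definition dTV_row (N : nat) (P : 'M[rat]_N) (pi : 'rV[rat]_N) (v : 'I_N)
  (t : nat) : rat :=
  2^-1 * \sum_(u < N) `|(P ^+ t) v u - pi 0 u|.

Definition is_mix_time_from (N : nat) (P : 'M[rat]_N) (pi : 'rV[rat]_N)
  (eps : rat) (v : 'I_N) (t : nat) : Prop :=
  dTV_row P pi v t <= eps /\ (forall s : nat, (s < t)%N -> eps < dTV_row P pi v s).

(* T = tau(eps) = max_v min{ t : d_TV(P^t_{v,.}, pi) <= eps } *)
Definition is_mixing_time (N : nat) (P : 'M[rat]_N) (pi : 'rV[rat]_N)
  (eps : rat) (T : nat) : Prop :=
  (forall v, exists tv, is_mix_time_from P pi eps v tv /\ (tv <= T)%N) /\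
  (exists v, is_mix_time_from P pi eps v T).

Definition is_mixing_rate (N : nat) (P : 'M[rat]_N) (pi : 'rV[rat]_N)
  (T : nat) : Prop := is_mixing_time P pi (4^-1) T.

Definition outdeg (N : nat) (P : 'M[rat]_N) (v : 'I_N) : nat :=
  #|[set u : 'I_N | 0 < P v u]|.
Definition Delta (N : nat) (P : 'M[rat]_N) : nat := (\max_(v < N) outdeg P v)%N.

Definition Delta_bar (N : nat) (dbar : 'I_N -> nat) : nat := (\max_(v < N) dbar v)%N.

Definition rotor_router (N : nat) (P : 'M[rat]_N) (dbar : 'I_N -> nat)
  (sigma : 'I_N -> nat -> 'I_N) : Prop :=
  (forall v, (0 < dbar v)%N) /\
  (forall v u, (dbar v)%:R * P v u \is a Num.int) /\
  (forall v (i : nat), sigma v i = sigma v (i %% dbar v)%N) /\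
  (forall v (i : nat), (i < dbar v)%N -> 0 < P v (sigma v i)) /\
  (forall v u, (#|[set j : 'I_(dbar v) | sigma v j == u]|)%:R = (dbar v)%:R * P v u).

Definition Icount (N : nat) (sigma : 'I_N -> nat -> 'I_N) (v u : 'I_N) (z z' : nat) : nat :=
  (\sum_(z <= j < z') (sigma v j == u))%N.

(* (chi^(t), sum_{s<t} chi^(s)) *)
Fixpoint rr_state (N : nat) (sigma : 'I_N -> nat -> 'I_N) (chi0 : 'I_N -> nat) (t : nat)
  : ('I_N -> nat) * ('I_N -> nat) :=
  match t with
  | O => (chi0, fun _ => 0%N)
  | t'.+1 =>
      let c := (rr_state sigma chi0 t').1 in
      let S := (rr_state sigma chi0 t').2 in
      (fun u => (\sum_(v < N) Icount sigma v u (S v) (S v + c v))%N,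
       fun v => (S v + c v)%N)
  end.

Definition rr_chi (N : nat) (sigma : 'I_N -> nat -> 'I_N) (chi0 : 'I_N -> nat) (t : nat)
  : 'I_N -> nat := (rr_state sigma chi0 t).1.

Definition rw_mu (N : nat) (P : 'M[rat]_N) (chi0 : 'I_N -> nat) (t : nat) : 'rV[rat]_N :=
  (\row_(v < N) (chi0 v)%:R) *m P ^+ t.

(* Main.v *)
Require Import Defs.
From HB Require Import structures.
From mathcomp Require Import all_boot all_order all_algebra.
From mathcomp Require Import ring lra zify.
Import Order.TTheory GRing.Theory Num.Theory.
Local Open Scope ring_scope.
Set Implicit Arguments. Unset Strict Implicit.

Lemma G_bound (f : nat -> rat) (tau : nat) :
  (forall s, 0 <= f s) -> (forall s, f (s + tau)%N <= f s / 2) ->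
  (forall s, f (s + tau)%N <= 2^-1) ->
  forall n, \sum_(0 <= s < n) f (s + tau)%N <= tau%:R.
Proof.
move=> H0 Hh H12.
case: (posnP tau) => [t0|tpos]; first subst tau.
  move=> n; have Hz : forall s, f (s + 0)%N <= 0.
    move=> s; have := Hh s; rewrite addn0 => h; have := H0 s. lra.
  by apply: le_trans (sumr_le0 _ _) _ => // i _; apply: Hz.
move=> n; elim: n {-2}n (leqnn n) => [|m IH] n Hn.
  by move: Hn; rewrite leqn0 => /eqP ->; rewrite big_geq.
case: (leqP n tau) => Hnt.
  apply: le_trans (_ : \sum_(0 <= s < n) (2^-1 : rat) <= _).
    by apply: ler_sum => i _; apply: H12.
  rewrite sumr_const_nat subn0 -[X in X <= _]mulr_natr.
  have : (n%:R : rat) <= tau%:R by rewrite ler_nat.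
  have := ler0n rat n; lra.
have Hsplit : n = (tau + (n - tau))%N by lia.
rewrite Hsplit (@big_cat_nat _ _ _ tau) //= ?leq_addr //.
have -> : \sum_(tau <= i < tau + (n - tau)) f (i + tau)%N
        = \sum_(0 <= i < n - tau) f (i + tau + tau)%N.
  by rewrite -{1}[tau]add0n big_addn addKn.
have H1 : \sum_(0 <= i < tau) f (i + tau)%N <= tau%:R / 2.
  apply: le_trans (_ : \sum_(0 <= s < tau) (2^-1 : rat) <= _).
    by apply: ler_sum => i _; apply: H12.
  rewrite sumr_const_nat subn0 -[X in X <= _]mulr_natr. have := ler0n rat tau; lra.
have H2 : \sum_(0 <= i < n - tau) f (i + tau + tau)%N
          <= (\sum_(0 <= i < n - tau) f (i + tau)%N) / 2.
  rewrite mulr_suml; apply: ler_sum => i _; apply: Hh.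
have H3 := IH (n - tau)%N ltac:(lia).
lra.
Qed.

Lemma F_bound (f : nat -> rat) (tau : nat) :
  (forall s, 0 <= f s) -> (forall s, f s <= 2) ->
  (forall s, f (s + tau)%N <= f s / 2) ->
  (forall s, f (s + tau)%N <= 2^-1) ->
  forall T, \sum_(0 <= s < T) f s <= 3 * tau%:R.
Proof.
move=> H0 H2 Hh H12 T.
apply: le_trans (_ : \sum_(0 <= s < tau + T) f s <= _).
  rewrite (@big_cat_nat _ _ _ T 0 (tau + T)) //= ?leq_addl //.
  rewrite lerDl; apply: sumr_ge0 => i _; apply: H0.
rewrite (@big_cat_nat _ _ _ tau) //= ?leq_addr //.
rewrite -{2}[tau]add0n big_addn addKn.
have H1 : \sum_(0 <= i < tau) f i <= 2 * tau%:R.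
  apply: le_trans (_ : \sum_(0 <= s < tau) (2 : rat) <= _).
    by apply: ler_sum => i _; apply: H2.
  by rewrite sumr_const_nat subn0 mulr_natr.
have := @G_bound f tau H0 Hh H12 T.
lra.
Qed.

Lemma one_mxE' N (i j : 'I_N) : (1 : 'M[rat]_N) i j = (i == j)%:R.
Proof. by rewrite -[1]/(1%:M) mxE. Qed.

Lemma PS_E N (P : 'M[rat]_N) s (i j : 'I_N) :
  (P ^+ s.+1) i j = \sum_k (P^+s) i k * P k j.
Proof. by rewrite exprSr -mulmxE mxE. Qed.

Lemma PD_E N (P : 'M[rat]_N) s t (i j : 'I_N) :
  (P ^+ (s + t)) i j = \sum_k (P^+s) i k * (P^+t) k j.
Proof. by rewrite exprD -mulmxE mxE. Qed.

Lemma Pt_ge0 N (P : 'M[rat]_N) : stochastic P -> forall t i j, 0 <= (P^+t) i j.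
Proof.
move=> [H0 _]; elim=> [|t IH] i j.
  by rewrite expr0 one_mxE' ler0n.
rewrite PS_E; apply: sumr_ge0 => k _; apply: mulr_ge0 => //.
Qed.

Lemma Pt_row N (P : 'M[rat]_N) : stochastic P -> forall t i, \sum_j (P^+t) i j = 1.
Proof.
move=> [H0 H1]; elim=> [|t IH] i.
  rewrite expr0 (bigD1 i) //= one_mxE' eqxx big1 ?addr0 // => j /negPf.
  by rewrite one_mxE' eq_sym => ->.
under eq_bigr do rewrite PS_E.
rewrite exchange_big /= -(IH i); apply: eq_bigr => k _.
by rewrite -mulr_sumr H1 mulr1.
Qed.

Lemma piPt N (P : 'M[rat]_N) pi : stationary P pi ->
  forall t j, \sum_u pi 0 u * (P^+t) u j = pi 0 j.
Proof.
move=> [_ [_ Hs]]; elim=> [|t IH] j.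
  rewrite (bigD1 j) //= one_mxE' eqxx mulr1 big1 ?addr0 // => u /negPf.
  by rewrite one_mxE' => ->; rewrite mulr0.
under eq_bigr do rewrite PS_E mulr_sumr.
rewrite exchange_big /=.
transitivity (\sum_k (\sum_u pi 0 u * (P ^+ t) u k) * P k j).
  by apply: eq_bigr => k _; rewrite mulr_suml; apply: eq_bigr => u _; rewrite mulrA.
under eq_bigr do rewrite IH.
by rewrite -{2}Hs mxE.
Qed.

Lemma rev_Pt N (P : 'M[rat]_N) pi : reversible P pi ->
  forall s v w, pi 0 v * (P^+s) v w = pi 0 w * (P^+s) w v.
Proof.
move=> Hr; elim=> [|s IH] v w.
  rewrite expr0 !one_mxE' eq_sym; case: eqP => [->|] //; by rewrite !mulr0.
rewrite PS_E mulr_sumr.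
have -> : (P ^+ s.+1) w v = \sum_k P w k * (P^+s) k v by rewrite exprS -mulmxE mxE.
rewrite mulr_sumr; apply: eq_bigr => k _.
rewrite mulrA IH -mulrA [(P ^+ s) k v * _]mulrC mulrA Hr; ring.
Qed.

Lemma pi_pos N (P : 'M[rat]_N) pi : stochastic P -> irreducible P -> stationary P pi ->
  forall v, 0 < pi 0 v.
Proof.
move=> Hs Hi Hst v.
have [u0 Hu0] : exists u, 0 < pi 0 u.
  case: (pickP (fun u => 0 < pi 0 u)) => [u Hu|Hall]; first by exists u.
  have : \sum_(v < N) pi 0 v <= 0.
    by apply: sumr_le0 => i _; rewrite leNgt Hall.
  by case: Hst => _ [-> _]; rewrite ler10.
have [t Ht] := Hi u0 v.
rewrite -(piPt Hst t) (bigD1 u0) //=.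
apply: (lt_le_trans (y := pi 0 u0 * (P ^+ t) u0 v)); first exact: mulr_gt0.
rewrite lerDl; apply: sumr_ge0 => i _; apply: mulr_ge0; last exact: Pt_ge0.
by case: Hst.
Qed.

Definition Dv N (P : 'M[rat]_N) (pi : 'rV[rat]_N) (w : 'I_N) (s : nat) : rat :=
  \sum_v `|(P^+s) w v - pi 0 v|.

Lemma D_ge0 N (P : 'M[rat]_N) pi w s : 0 <= Dv P pi w s.
Proof. by apply: sumr_ge0 => v _. Qed.

Lemma D_le2 N (P : 'M[rat]_N) pi : stochastic P -> stationary P pi ->
  forall w s, Dv P pi w s <= 2.
Proof.
move=> Hs Hst w s.
apply: le_trans (_ : \sum_v ((P^+s) w v + pi 0 v) <= _).
  apply: ler_sum => v _; apply: le_trans (ler_normB _ _) _.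
  case: Hst => Hp _.
  by rewrite !ger0_norm ?Hp ?(Pt_ge0 Hs).
by rewrite big_split /= (Pt_row Hs); case: Hst => _ [-> _].
Qed.

Lemma D_prod N (P : 'M[rat]_N) pi : stochastic P -> stationary P pi ->
  forall w s t, Dv P pi w (s + t) <= \sum_u `|(P^+s) w u - pi 0 u| * Dv P pi u t.
Proof.
move=> Hs Hst w s t.
have Hid : forall j, (P^+(s+t)) w j - pi 0 j
    = \sum_u ((P^+s) w u - pi 0 u) * ((P^+t) u j - pi 0 j).
  move=> j; under eq_bigr do rewrite mulrBl !mulrBr.
  rewrite !sumrB -PD_E (piPt Hst) -!mulr_suml (Pt_row Hs).
  by case: Hst => _ [-> _]; rewrite !mul1r subrr subr0.
rewrite /Dv.
under eq_bigr do rewrite Hid.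
apply: le_trans (_ : \sum_j \sum_u `|(P ^+ s) w u - pi 0 u| * `|(P ^+ t) u j - pi 0 j| <= _).
  apply: ler_sum => j _; apply: le_trans (ler_norm_sum _ _ _) _.
  by apply: ler_sum => u _; rewrite normrM.
rewrite exchange_big /=; apply: ler_sum => u _; by rewrite mulr_sumr.
Qed.

Lemma D_mono1 N (P : 'M[rat]_N) pi : stochastic P -> stationary P pi ->
  forall w s, Dv P pi w s.+1 <= Dv P pi w s.
Proof.
move=> Hs Hst w s.
have Hid : forall j, (P^+s.+1) w j - pi 0 j
    = \sum_u ((P^+s) w u - pi 0 u) * P u j.
  move=> j; under eq_bigr do rewrite mulrBl.
  rewrite sumrB -PS_E.
  by case: Hst => _ [_ Hpi]; rewrite -{1}Hpi mxE.
rewrite /Dv.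
under eq_bigr do rewrite Hid.
apply: le_trans (_ : \sum_j \sum_u `|(P ^+ s) w u - pi 0 u| * P u j <= _).
  apply: ler_sum => j _; apply: le_trans (ler_norm_sum _ _ _) _.
  by apply: ler_sum => u _; case: Hs => H0 _; rewrite normrM (ger0_norm (H0 u j)).
rewrite exchange_big /=; apply: ler_sum => u _.
by rewrite -mulr_sumr; case: Hs => _ ->; rewrite mulr1.
Qed.

Lemma D_mono N (P : 'M[rat]_N) pi : stochastic P -> stationary P pi ->
  forall w s r, Dv P pi w (s + r) <= Dv P pi w s.
Proof.
move=> Hs Hst w s; elim=> [|r IH]; first by rewrite addn0.
by rewrite addnS; apply: le_trans (D_mono1 Hs Hst _ _) IH.
Qed.

Lemma dTV_D N (P : 'M[rat]_N) pi v t : dTV_row P pi v t = 2^-1 * Dv P pi v t.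
Proof. by []. Qed.

Lemma mix_half N (P : 'M[rat]_N) pi tstar : stochastic P -> stationary P pi ->
  is_mixing_rate P pi tstar -> forall u, Dv P pi u tstar <= 2^-1.
Proof.
move=> Hs Hst [Hm _] u.
have [tv [[Htv _] Hle]] := Hm u.
rewrite dTV_D in Htv.
have -> : tstar = (tv + (tstar - tv))%N by rewrite subnKC.
apply: le_trans (D_mono Hs Hst _ _ _) _.
lra.
Qed.

Lemma sumD_bound N (P : 'M[rat]_N) pi tstar : stochastic P -> stationary P pi ->
  is_mixing_rate P pi tstar -> forall w T, \sum_(0 <= s < T) Dv P pi w s <= 3 * tstar%:R.
Proof.
move=> Hs Hst Hm w T.
apply: F_bound.
- by move=> s; apply: D_ge0.
- by move=> s; apply: D_le2.
- move=> s; apply: le_trans (D_prod Hs Hst _ _ _) _.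
  rewrite mulr_suml; apply: ler_sum => u _.
  apply: ler_wpM2l => //; exact: mix_half Hm u.
- move=> s; rewrite addnC; apply: le_trans (D_mono Hs Hst _ _ _) _.
  exact: mix_half Hm w.
Qed.
Lemma Ic_shift N (sigma : 'I_N -> nat -> 'I_N) (d : nat) u v :
  (forall i, sigma u i = sigma u (i %% d)%N) ->
  forall z, Icount sigma u v z (z + d) = Icount sigma u v 0 d.
Proof.
move=> Hp; elim=> [|z IH]; first by rewrite add0n.
rewrite -IH /Icount.
have H1 : (\sum_(z <= j < (z + d).+1) (sigma u j == v) =
   (sigma u z == v) + \sum_(z.+1 <= j < z.+1 + d) (sigma u j == v))%N.
  by rewrite big_ltn ?ltnS ?leq_addr // addSn.
have H2 : (\sum_(z <= j < (z + d).+1) (sigma u j == v) =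
   \sum_(z <= j < z + d) (sigma u j == v) + (sigma u (z + d) == v))%N.
  by rewrite big_nat_recr //= leq_addr.
have H3 : sigma u (z + d)%N = sigma u z by rewrite Hp modnDr -Hp.
move: H1 H2; rewrite H3 => -> /eqP; rewrite addnC eqn_add2r => /eqP.
done.
Qed.

Lemma Ic_full N (sigma : 'I_N -> nat -> 'I_N) (d : nat) u v :
  Icount sigma u v 0 d = #|[set j : 'I_d | sigma u j == v]|.
Proof.
rewrite /Icount big_mkord cardsE -sum1_card [RHS]big_mkcond /=.
apply: eq_bigr => j _; rewrite unfold_in /= -[eqn _ _]/(sigma u j == v); by case: (sigma u j == v).
Qed.

Lemma Ic_cat N (sigma : 'I_N -> nat -> 'I_N) u v a b c :
  (a <= b)%N -> (b <= c)%N ->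
  Icount sigma u v a c = (Icount sigma u v a b + Icount sigma u v b c)%N.
Proof. by move=> Hab Hbc; rewrite /Icount (big_cat_nat Hab Hbc). Qed.

Lemma Ic_mult N (sigma : 'I_N -> nat -> 'I_N) (d : nat) u v :
  (forall i, sigma u i = sigma u (i %% d)%N) ->
  forall q z, Icount sigma u v z (z + q * d) = (q * Icount sigma u v 0 d)%N.
Proof.
move=> Hp; elim=> [|q IH] z; first by rewrite mul0n addn0 /Icount big_geq.
rewrite (@Ic_cat _ _ _ _ _ (z + q * d)) ?leq_addr //; last by rewrite leq_add2l leq_mul2r leqnSn orbT.
rewrite IH mulSn.
have -> : (z + (d + q * d) = z + q * d + d)%N by lia.
by rewrite Ic_shift // [in RHS]mulSn addnC.
Qed.

Lemma Ic_le N (sigma : 'I_N -> nat -> 'I_N) u v z r :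
  (Icount sigma u v z (z + r) <= r)%N.
Proof.
rewrite /Icount; apply: leq_trans (_ : \sum_(z <= j < z + r) 1 <= _)%N.
  by apply: leq_sum => j _; case: eqP.
by rewrite sum_nat_const_nat addnC addnK muln1.
Qed.

Lemma Ic_sum N (sigma : 'I_N -> nat -> 'I_N) u z z' :
  (\sum_(v < N) Icount sigma u v z z')%N = (z' - z)%N.
Proof.
rewrite /Icount exchange_big /=.
transitivity (\sum_(z <= j < z') 1)%N; last by rewrite sum_nat_const_nat muln1.
apply: eq_bigr => j _.
rewrite (bigD1 (sigma u j)) //= eqxx big1 ?addn0 // => v.
by rewrite eq_sym => /negPf ->.
Qed.

Lemma P_le1 N (P : 'M[rat]_N) : stochastic P -> forall u v, P u v <= 1.
Proof.
move=> [H0 H1] u v; rewrite -(H1 u) (bigD1 v) //= lerDl.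
by apply: sumr_ge0 => i _.
Qed.

Lemma dev_bound N (P : 'M[rat]_N) dbar sigma :
  stochastic P -> rotor_router P dbar sigma -> forall u v z c,
  `|(Icount sigma u v z (z + c))%:R - c%:R * P u v|
    <= (if 0 < P u v then (dbar u)%:R else 0).
Proof.
move=> Hs [Hd0 [_ [Hper [Hpos Hcnt]]]] u v z c.
case: ifP => Hp.
  have Hk := Hcnt u v.
  rewrite -Ic_full in Hk.
  have Hd := Hd0 u.
  set d := dbar u in Hk Hd *.
  set k := Icount sigma u v 0 d in Hk.
  rewrite {1}(divn_eq c d).
  set q := (c %/ d)%N; set r := (c %% d)%N.
  have Hr : (r < d)%N by apply: ltn_pmod.
  rewrite addnA (@Ic_cat _ _ _ _ _ (z + q * d)) ?leq_addr //.
  rewrite (@Ic_mult _ _ _ _ v (Hper u)) -/k.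
  have Hle := Ic_le sigma u v (z + q * d) r.
  set a := Icount _ _ _ _ _ in Hle *.
  have -> : c = (q * d + r)%N by rewrite {1}(divn_eq c d).
  rewrite !natrD !natrM Hk.
  have HP1 := P_le1 Hs u v.
  have : (a%:R : rat) <= r%:R by rewrite ler_nat.
  have : (r%:R : rat) <= d%:R by rewrite ler_nat ltnW.
  have := ler0n rat a; have := ler0n rat r.
  move: Hp; rewrite -/d.
  set p := P u v; set A := (a%:R : rat); set R := (r%:R : rat); set D := (d%:R : rat).
  move=> Hp h1 h2 h3 h4.
  have -> : q%:R * (D * p) + A - (q%:R * D + R) * p = A - R * p by ring.
  have h5 : 0 <= R * (1 - p) by apply: mulr_ge0 => //; rewrite subr_ge0.
  have h6 : 0 <= R * p by apply: mulr_ge0 => //; apply: ltW.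
  rewrite mulrBr mulr1 subr_ge0 in h5.
  rewrite ler_norml; apply/andP; split; lra.
have Hz : P u v = 0.
  case: Hs => H0 _; have := H0 u v; rewrite le_eqVlt Hp orbF => /eqP <-. done.
rewrite Hz mulr0 subr0 normr_le0 pnatr_eq0 /Icount; apply/eqP.
apply: big1 => j _; case: eqP => // Hj.
have := Hpos u (j %% dbar u)%N (ltn_pmod _ (Hd0 u)).
by rewrite -Hper Hj Hz ltxx.
Qed.

Lemma chi_succ N (sigma : 'I_N -> nat -> 'I_N) chi0 t v :
  rr_chi sigma chi0 t.+1 v = (\sum_u Icount sigma u v ((rr_state sigma chi0 t).2 u)
     ((rr_state sigma chi0 t).2 u + rr_chi sigma chi0 t u))%N.
Proof. by []. Qed.

Definition Ev N (P : 'M[rat]_N) sigma chi0 t v : rat :=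
  (rr_chi sigma chi0 t.+1 v)%:R - \sum_u (rr_chi sigma chi0 t u)%:R * P u v.

Lemma Ev_dev N (P : 'M[rat]_N) sigma chi0 t v : Ev P sigma chi0 t v =
  \sum_u ((Icount sigma u v ((rr_state sigma chi0 t).2 u)
     ((rr_state sigma chi0 t).2 u + rr_chi sigma chi0 t u))%:R
     - (rr_chi sigma chi0 t u)%:R * P u v).
Proof. by rewrite /Ev chi_succ natr_sum sumrB. Qed.

Lemma Ev_sum0 N (P : 'M[rat]_N) sigma chi0 t : stochastic P ->
  \sum_v Ev P sigma chi0 t v = 0.
Proof.
move=> [_ H1].
under eq_bigr do rewrite Ev_dev.
rewrite exchange_big /=; apply: big1 => u _.
by rewrite sumrB -natr_sum Ic_sum addKn -mulr_sumr H1 mulr1 subrr.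
Qed.

Lemma outdeg_sum N (P : 'M[rat]_N) v (X : rat) :
  \sum_u (if 0 < P v u then X else 0) = X * (outdeg P v)%:R.
Proof.
rewrite -big_mkcond /= sumr_const /outdeg cardsE.
by rewrite mulr_natr.
Qed.

Lemma Ev_bound N (P : 'M[rat]_N) pi dbar sigma chi0 t v :
  stochastic P -> reversible P pi -> (forall v, 0 < pi 0 v) ->
  rotor_router P dbar sigma ->
  `|Ev P sigma chi0 t v| <= (Delta_bar dbar)%:R * (Delta P)%:R.
Proof.
move=> Hs Hr Hpi Hrr.
rewrite Ev_dev; apply: le_trans (ler_norm_sum _ _ _) _.
apply: le_trans (_ : \sum_u (if 0 < P v u then (Delta_bar dbar)%:R else 0) <= _).
  apply: ler_sum => u _; apply: le_trans (dev_bound Hs Hrr u v _ _) _.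
  case: ifP => Huv; last by case: ifP.
  have -> : 0 < P v u.
    have : 0 < pi 0 u * P u v by apply: mulr_gt0.
    by rewrite Hr pmulr_rgt0.
  by rewrite ler_nat /Delta_bar (leq_bigmax u).
rewrite outdeg_sum ler_wpM2l // ler_nat /Delta.
exact: (leq_bigmax (F := outdeg P) v).
Qed.

Lemma mu0 N (P : 'M[rat]_N) chi0 w : rw_mu P chi0 0 0 w = (chi0 w)%:R.
Proof. by rewrite /rw_mu expr0 mulmx1 mxE. Qed.

Lemma mu_succ N (P : 'M[rat]_N) chi0 T w :
  rw_mu P chi0 T.+1 0 w = \sum_v rw_mu P chi0 T 0 v * P v w.
Proof. by rewrite /rw_mu exprSr -mulmxE mulmxA mxE. Qed.

Lemma main_id N (P : 'M[rat]_N) sigma chi0 w T :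
  (rr_chi sigma chi0 T w)%:R - rw_mu P chi0 T 0 w =
  \sum_(t < T) \sum_v Ev P sigma chi0 t v * (P^+(T - t.+1)) v w.
Proof.
elim: T w => [|T IH] w.
  by rewrite big_ord0 mu0 subrr.
rewrite big_ord_recr /= subnn expr0.
have -> : \sum_v Ev P sigma chi0 T v * (1 : 'M[rat]_N) v w = Ev P sigma chi0 T w.
  rewrite (bigD1 w) //= one_mxE' eqxx mulr1 big1 ?addr0 // => v /negPf.
  by rewrite one_mxE' => ->; rewrite mulr0.
rewrite mu_succ.
have -> : (rr_chi sigma chi0 T.+1 w)%:R - \sum_v rw_mu P chi0 T 0 v * P v w
   = Ev P sigma chi0 T w + \sum_v ((rr_chi sigma chi0 T v)%:R - rw_mu P chi0 T 0 v) * P v w.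
  rewrite /Ev; under [X in _ = _ + X]eq_bigr do rewrite mulrBl.
  rewrite sumrB; ring.
rewrite addrC; congr (_ + _).
transitivity (\sum_v \sum_(t < T) (\sum_y Ev P sigma chi0 t y * (P ^+ (T - t.+1)) y v) * P v w).
  by apply: eq_bigr => v _; rewrite IH mulr_suml.
rewrite exchange_big /=; apply: eq_bigr => t _.
rewrite subSS -(subnSK (ltn_ord t)).
transitivity (\sum_v \sum_y Ev P sigma chi0 t y * (P ^+ (T - t.+1)) y v * P v w).
  by apply: eq_bigr => v _; rewrite mulr_suml.
rewrite exchange_big /=; apply: eq_bigr => y _.
rewrite PS_E mulr_sumr; apply: eq_bigr => k _; by rewrite mulrA.
Qed.

Lemma pim_pos N (pi : 'rV[rat]_N) : (forall v, 0 < pi 0 v) -> 0 < pi_min pi.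
Proof.
move=> Hpi; rewrite /pi_min; apply: (big_ind (fun x => 0 < x)) => //.
by move=> x y hx hy; rewrite lt_min hx hy.
Qed.

Lemma pim_le N (pi : 'rV[rat]_N) v : pi_min pi <= pi 0 v.
Proof. exact: bigmin_le. Qed.

Theorem theorem5p9 (N : nat) (P : 'M[rat]_N) (pi : 'rV[rat]_N) (tstar : nat)
  (dbar : 'I_N -> nat) (sigma : 'I_N -> nat -> 'I_N) (chi0 : 'I_N -> nat) :
  stochastic P -> ergodic P -> stationary P pi -> reversible P pi ->
  is_mixing_rate P pi tstar ->
  rotor_router P dbar sigma ->
  forall (w : 'I_N) (T : nat),
    `|(rr_chi sigma chi0 T w)%:R - rw_mu P chi0 T 0 w|
      <= 3 * pi 0 w / pi_min pi * tstar%:R * (Delta P)%:R * (Delta_bar dbar)%:R.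
Proof.
move=> Hs [Hirr _] Hst Hr Hm Hrr w T.
have Hpi := pi_pos Hs Hirr Hst.
have Hpm0 := pim_pos Hpi.
set pm := pi_min pi in Hpm0 *.
have Hg : forall m v, `|(P^+m) v w - pi 0 w| <= pi 0 w / pm * `|(P^+m) w v - pi 0 v|.
  move=> m v.
  have Hv0 : pi 0 v != 0 by rewrite lt0r_neq0.
  have He : (P^+m) v w - pi 0 w = pi 0 w / pi 0 v * ((P^+m) w v - pi 0 v).
    rewrite mulrBr divfK // mulrAC -(rev_Pt Hr) [pi 0 v * _]mulrC mulfK //.
  rewrite He normrM ger0_norm; last by apply: divr_ge0; apply: ltW.
  apply: ler_wpM2r => //; apply: ler_wpM2l; first exact: ltW.
  by rewrite lef_pV2 ?posrE // pim_le.
rewrite main_id.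
set K := ((Delta_bar dbar)%:R * (Delta P)%:R : rat).
apply: le_trans (_ : \sum_(t < T) K * (pi 0 w / pm) * Dv P pi w (T - t.+1) <= _).
  apply: le_trans (ler_norm_sum _ _ _) _; apply: ler_sum => t _.
  have -> : \sum_v Ev P sigma chi0 t v * (P^+(T - t.+1)) v w
     = \sum_v Ev P sigma chi0 t v * ((P^+(T - t.+1)) v w - pi 0 w).
    under [RHS]eq_bigr do rewrite mulrBr.
    by rewrite sumrB -mulr_suml Ev_sum0 // mul0r subr0.
  apply: le_trans (ler_norm_sum _ _ _) _.
  rewrite /Dv mulr_sumr; apply: ler_sum => v _.
  rewrite normrM -mulrA; apply: ler_pM => //; first exact: (Ev_bound chi0 t v Hs Hr Hpi Hrr).
have Hre : \sum_(t < T) Dv P pi w (T - t.+1) = \sum_(0 <= s < T) Dv P pi w s.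
  by rewrite [RHS]big_nat_rev big_mkord add0n.
rewrite -mulr_sumr Hre.
have H3 := sumD_bound Hs Hst Hm w T.
have HK : 0 <= K * (pi 0 w / pm).
  apply: mulr_ge0; first by apply: mulr_ge0.
  by apply: divr_ge0; apply: ltW.
apply: le_trans (ler_wpM2l HK H3) _.
rewrite /K le_eqVlt; apply/orP; left; apply/eqP; ring.
Qed.
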